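(* Let $k\geq 2$ be an integer and let $C_k(n)$ denote the number of closed words of length $n$ over the alphabet $\Sigma_k=\{0,1,\ldots,k-1\}$. (a) There exist constants $N>0$ and $c>0$ (depending on $k$) such that $C_k(n)\geq c\,\frac{k^n}{n}$ for all $n>N$. (b) There exist constants $N'>0$ and $c'>0$ (depending on $k$) such that $C_k(n)\leq c'\,\frac{k^n}{n}$ for all $n>N'$.
   Context: A word $u$ is a factor of a word $w$ if $w=xuy$ for some words $x,y$; occurrences of $u$ in $w$ are counted as factor positions (overlaps allowed). A border of a word $w$ is a non-empty word $u$ that is both a proper prefix and a proper suffix of $w$. A word $w$ is closed if $|w|\leq 1$ or if $w$ has a border that occurs exactly twice in $w$ (as a factor). *)

(* Defs.v *)
From mathcomp Require Import all_boot all_order all_algebra.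
Set Implicit Arguments. Unset Strict Implicit. Unset Printing Implicit Defensive.

Definition occ (T : eqType) (u w : seq T) : nat :=
  if size u <= size w then
    count (fun i => take (size u) (drop i w) == u) (iota 0 (size w - size u).+1)
  else 0.

Definition border (T : eqType) (u w : seq T) : bool :=
  [&& 0 < size u, size u < size w, prefix u w & suffix u w].

(* w is closed: |w| <= 1, or w has a border occurring exactly twice in w.
   Borders of w are exactly the prefixes take i w for 0 < i < |w|. *)
Definition closed_word (T : eqType) (w : seq T) : bool :=
  (size w <= 1) ||
  has (fun i => border (take i w) w && (occ (take i w) w == 2)) (iota 0 (size w)).

Definition C (k n : nat) : nat :=
  #|[set w : n.-tuple 'I_k | closed_word (tval w)]|.

(* Main.v *)
Require Import Defs.
From mathcomp Require Import all_boot all_order all_algebra.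
From mathcomp Require Import zify ring lra.
Import Order.TTheory GRing.Theory Num.Theory.

Definition fit (A : Type) (a0 : A) n (s : seq A) : n.-tuple A :=
  insubd (nseq_tuple n a0) s.

Arguments fit {A} a0 n s.
Lemma val_fit A a0 n s : size s = n -> val (@fit A a0 n s) = s.
Proof. by move=> hs; rewrite /fit val_insubd hs eqxx. Qed.

Lemma card_free (A : finType) (a0 : A) n (S : {set n.-tuple A}) (F : seq nat) :
  {in S &, forall x y : n.-tuple A,
     (forall j, j \in F -> nth a0 x j = nth a0 y j) -> x = y} ->
  #|S| <= #|A| ^ size F.
Proof.
move=> H.
pose f (x : n.-tuple A) : (size F).-tuple A := map_tuple (nth a0 x) (in_tuple F).
rewrite -card_tuple -(@card_in_imset _ _ f S); last first.
  move=> x y xS yS /(congr1 val) /= e; apply: H => // j jF.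
  have := congr1 (fun s => nth a0 s (index j F)) e.
  by rewrite /= !(nth_map 0) ?index_mem // nth_index.
by rewrite -cardsT subset_leq_card // subsetT.
Qed.

Lemma det_free (A : finType) (a0 : A) n (S : {set n.-tuple A}) (F : seq nat) :
  (forall x y, x \in S -> y \in S -> forall j, j < n -> j \notin F ->
     (forall j', j' < j -> nth a0 x j' = nth a0 y j') -> nth a0 x j = nth a0 y j) ->
  #|S| <= #|A| ^ size F.
Proof.
move=> H; apply: card_free => x y xS yS hF.
apply: val_inj; apply: (@eq_from_nth _ a0); first by rewrite !size_tuple.
move=> j; rewrite size_tuple; elim/ltn_ind: j => j IH jn.
case: (boolP (j \in F)) => jF; first exact: hF.
apply: H => // j' lt; apply: IH => //; exact: ltn_trans jn.
Qed.

Lemma card_cover (T : finType) (S : {set T}) N (P : nat -> {set T}) :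
  (forall x, x \in S -> exists2 i, i < N & x \in P i) ->
  #|S| <= \sum_(i < N) #|P i|.
Proof.
move=> H.
have -> : \sum_(i < N) #|P i| = \sum_x \sum_(i < N) (x \in P i : nat).
  rewrite exchange_big /=; apply: eq_bigr => i _.
  by rewrite -sum1_card big_mkcond /=; apply: eq_bigr => x _; case: (x \in P i).
rewrite -sum1_card [X in _ <= X](bigID (mem S)) /= (leq_trans _ (leq_addr _ _)) //.
apply: leq_sum => x xS; have [i iN xP] := H x xS.
by rewrite (bigD1 (Ordinal iN)) //= xP.
Qed.

Lemma sum_reindex_le N M (P : pred nat) (h : nat -> nat) (f : nat -> nat) :
  (forall i, i < N -> P i -> h i <= M) ->
  (forall i j, i < N -> j < N -> P i -> P j -> h i = h j -> i = j) ->
  \sum_(i < N | P i) f (h i) <= \sum_(d < M.+1) f d.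
Proof.
move=> hM hinj.
pose g (i : 'I_N) : 'I_M.+1 := inord (h i).
have -> : \sum_(i < N | P i) f (h i) = \sum_(i in [pred i : 'I_N | P i]) f (g i).
  by apply: eq_bigr => i Pi; rewrite /g inordK // ltnS hM.
rewrite -(big_imset (fun d : 'I_M.+1 => f d)) /=; last first.
  move=> i j; rewrite !inE => Pi Pj /(congr1 val) /=.
  rewrite /g !inordK ?ltnS ?hM // => e.
  apply: val_inj; exact: (hinj _ _ (ltn_ord i) (ltn_ord j)).
by rewrite [X in _ <= X](bigID (mem (g @: [pred i : 'I_N | P i]))) /= leq_addr.
Qed.


Lemma geo_lt K N : 1 < K -> \sum_(e < N) K ^ e < K ^ N.
Proof.
move=> K1; elim: N => [|N IH]; first by rewrite big_ord0 expn0.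
rewrite big_ord_recr /= expnS.
have : K ^ N + K ^ N <= K * K ^ N by rewrite addnn -mul2n leq_mul2r K1 orbT.
move: IH; set S := \sum_(_ < _) _; lia.
Qed.

Lemma occP (A : eqType) (a0 : A) (u x : seq A) i : i + size u <= size x ->
  reflect (forall t, t < size u -> nth a0 x (i + t) = nth a0 u t)
          (take (size u) (drop i x) == u).
Proof.
move=> h; apply: (iffP eqP) => [e t ht|H].
  by rewrite -[in RHS]e nth_take // nth_drop.
apply: (@eq_from_nth _ a0); first by rewrite size_take_min size_drop; lia.
move=> t; rewrite size_take_min size_drop => ht.
have ht' : t < size u by lia.
by rewrite nth_take // nth_drop H.
Qed.

Arguments occP {A} a0 {u x i}.
Lemma occ_infix (A : eqType) (u x : seq A) i :
  take (size u) (drop i x) == u -> infix u x.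
Proof.
move/eqP=> e; apply: (@infix_trans _ (drop i x)); last exact: infix_drop.
by rewrite -e infix_take.
Qed.

Lemma count3 (p : pred nat) N a b c : a < b -> b < c -> c <= N ->
  p a -> p b -> p c -> 3 <= count p (iota 0 N.+1).
Proof.
move=> ab bc cN pa pb pc; rewrite -size_filter.
have -> : 3 = size [:: a; b; c] by [].
apply: uniq_leq_size.
  rewrite /= !inE; apply/and3P; split => //; apply/negP; lia.
move=> z; rewrite !inE mem_filter mem_iota => /or3P[] /eqP ->; apply/andP; split => //; lia.
Qed.

Lemma count2 (p : pred nat) N : 0 < N -> p 0 -> p N ->
  (forall i, 0 < i < N -> ~~ p i) -> count p (iota 0 N.+1) = 2.
Proof.
move=> N0 p0 pN H.
have -> : iota 0 N.+1 = 0 :: iota 1 N.-1 ++ [:: N].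
  rewrite /=; congr (_ :: _).
  have e : N = N.-1 + 1 by lia.
  by rewrite {1}e iotaD /= add1n prednK.
rewrite /= count_cat /= p0 pN.
rewrite (eq_in_count (a2 := pred0)) ?count_pred0 //.
move=> i; rewrite mem_iota => hi; apply/negbTE/H; lia.
Qed.

Lemma occPm (A : eqType) (a0 : A) (u x : seq A) i m : size u = m -> i + m <= size x ->
  reflect (forall t, t < m -> nth a0 x (i + t) = nth a0 u t)
          (take m (drop i x) == u).
Proof. by move=> <-; apply: occP. Qed.


Lemma sum_card (T : finType) (P : pred T) : \sum_x (P x : nat) = #|[set x | P x]|.
Proof.
rewrite -sum1_card [RHS]big_mkcond; apply: eq_bigr => x _; rewrite inE; by case: (P x).
Qed.

Lemma occ_lb (A : finType) (a0 : A) (u : seq A) B i : i + size u <= B ->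
  #|A| ^ (B - size u) <= #|[set x : B.-tuple A | take (size u) (drop i x) == u]|.
Proof.
move=> h; set m := size u.
pose g (y : seq A) := take i y ++ u ++ drop i y.
pose f (y : (B - m).-tuple A) : B.-tuple A := fit a0 B (g y).
have sz (y : (B - m).-tuple A) : size (g y) = B.
  rewrite /g !size_cat size_take_min size_drop size_tuple; lia.
have szt (y : (B - m).-tuple A) : size (take i y) = i.
  rewrite size_take_min size_tuple; lia.
rewrite -card_tuple -cardsT -(@card_in_imset _ _ f [set: (B-m).-tuple A]); last first.
  move=> y z _ _ /(congr1 val); rewrite /f !val_fit // /g => e.
  apply: val_inj => /=.
  rewrite -(cat_take_drop i y) -(cat_take_drop i z).
  have e1 := congr1 (take i) e; rewrite !take_size_cat ?szt // in e1.
  have e2 := congr1 (drop (i + m)) e.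
  rewrite !catA !drop_size_cat ?size_cat ?szt // in e2.
  by rewrite e1 e2.
apply: subset_leq_card; apply/subsetP => x /imsetP [y _ ->].
rewrite inE /f val_fit // /g drop_size_cat ?szt //.
by rewrite take_size_cat.
Qed.

Lemma pair_ub (A : finType) (a0 : A) (u : seq A) B i j :
  i <= j -> j + size u <= B ->
  #|[set x : B.-tuple A | (take (size u) (drop i x) == u) &&
                         (take (size u) (drop j x) == u)]|
  <= #|A| ^ (B - 2 * size u) + #|A| ^ ((B - size u) - (j - i)).
Proof.
move=> ij jB; set m := size u.
set S := [set x : B.-tuple A | _].
have key : forall x y, x \in S -> y \in S -> forall p, p < B ->
     (i <= p < i + m) || (j <= p < j + m) -> nth a0 x p = nth a0 y p.
  move=> x y; rewrite !inE.
  have hi (z : B.-tuple A) : i + size u <= size (val z) by rewrite size_tuple; lia.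
  have hj (z : B.-tuple A) : j + size u <= size (val z) by rewrite size_tuple; lia.
  move=> /andP[/(occP a0 (hi x )) xi /(occP a0 (hj x )) xj].
  move=> /andP[/(occP a0 (hi y )) yi /(occP a0 (hj y )) yj] p pB /orP[] /andP[h1 h2].
    have -> : p = i + (p - i) by lia.
    rewrite xi ?yi //; move: h2; rewrite -/m; lia.
  have -> : p = j + (p - j) by lia.
  rewrite xj ?yj //; move: h2; rewrite -/m; lia.
case: (leqP m (j - i)) => hd.
  set F := iota 0 i ++ iota (i + m) (j - i - m) ++ iota (j + m) (B - j - m).
  have : #|S| <= #|A| ^ size F.
    apply: det_free => x y xS yS p pB pF _; apply: key => //.
    move: pF; rewrite /F !mem_cat !mem_iota; apply: contraR; lia.
  rewrite /F !size_cat !size_iota => h; apply: leq_trans h _.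
  have -> : i + (j - i - m + (B - j - m)) = B - 2 * m by lia.
  exact: leq_addr.
set F := iota 0 i ++ iota (j + m) (B - j - m).
have : #|S| <= #|A| ^ size F.
  apply: det_free => x y xS yS p pB pF _; apply: key => //.
  move: pF; rewrite /F !mem_cat !mem_iota; apply: contraR; lia.
rewrite /F !size_cat !size_iota => h; apply: leq_trans h _.
have -> : i + (B - j - m) = B - m - (j - i) by lia.
exact: leq_addl.
Qed.


Lemma amgm a b : 2 * (a * b) <= a ^ 2 + b ^ 2.
Proof.
wlog h : a b / a <= b.
  move=> H; case: (leqP a b) => [|/ltnW] h; first exact: H.
  by rewrite [a * b]mulnC addnC; apply: H.
rewrite -(subnKC h); set d := b - a; rewrite sqrnD; nia.
Qed.

Lemma CS (T : finType) (Z : T -> nat) :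
  (\sum_x Z x) ^ 2 <= #|[set x | 0 < Z x]| * \sum_x Z x ^ 2.
Proof.
set NA := [set x | 0 < Z x].
have e : \sum_x Z x = \sum_(x in NA) Z x.
  rewrite [LHS](bigID (mem NA)) /= [X in _ + X]big1 ?addn0 // => x.
  by rewrite inE -eqn0Ngt => /eqP.
have e2 : \sum_(x in NA) Z x ^ 2 <= \sum_x Z x ^ 2.
  by rewrite [X in _ <= X](bigID (mem NA)) leq_addr.
rewrite e; apply: leq_trans (leq_mul (leqnn _) e2).
rewrite -(leq_pmul2l (isT : 0 < 2)).
have -> : (\sum_(x in NA) Z x) ^ 2 = \sum_(x in NA) \sum_(y in NA) Z x * Z y.
  by rewrite -mulnn big_distrlr.
rewrite big_distrr /=.
apply: leq_trans (_ : \sum_(x in NA) \sum_(y in NA) (Z x ^ 2 + Z y ^ 2) <= _).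
  apply: leq_sum => x _; rewrite big_distrr; apply: leq_sum => y _.
  exact: amgm.
under eq_bigr do rewrite big_split /= sum_nat_const.
rewrite big_split /= sum_nat_const -big_distrr /=; lia.
Qed.


Lemma geo2 K E : 1 < K -> \sum_(d < E.+1) K ^ d < 2 * K ^ E.
Proof.
move=> K1; rewrite big_ord_recr /=; have := geo_lt K E K1.
set S := \sum_(_ < _) _; lia.
Qed.

Lemma sumj (A : finType) (a0 : A) (u : seq A) M B i :
  1 < #|A| -> M <= B - size u -> size u <= M -> i < M ->
  \sum_(j < M) #|[set x : B.-tuple A | (take (size u) (drop i x) == u) &&
                         (take (size u) (drop j x) == u)]|
  <= M * #|A| ^ (B - 2 * size u) + 4 * #|A| ^ (B - size u).
Proof.
move=> K1 ME mM iM; set m := size u; set K := #|A|; set E := B - m.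
have step : forall j : 'I_M, #|[set x : B.-tuple A | (take m (drop i x) == u) &&
                         (take m (drop j x) == u)]|
    <= K ^ (B - 2 * m) + K ^ (E - (i - j + (j - i))).
  move=> j; have jM := ltn_ord j; case: (leqP i j) => h.
    have -> : i - j + (j - i) = j - i by lia.
    apply: pair_ub => //; rewrite -/m; lia.
  have -> : i - j + (j - i) = i - j by lia.
  have -> : [set x : B.-tuple A | (take m (drop i x) == u) && (take m (drop j x) == u)]
      = [set x : B.-tuple A | (take m (drop j x) == u) && (take m (drop i x) == u)].
    by apply/setP => x; rewrite !inE andbC.
  apply: (@pair_ub A a0); lia.
apply: (@leq_trans (\sum_(j < M) (K ^ (B - 2 * m) + K ^ (E - (i - j + (j - i)))))).
  by apply: leq_sum => j _; exact: step.
rewrite big_split /= sum_nat_const card_ord leq_add2l.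
rewrite (bigID (fun j : 'I_M => j <= i)) /=.
have g := geo2 K E K1.
have p1 : \sum_(j < M | j <= i) K ^ (E - (i - j + (j - i))) <= \sum_(d < E.+1) K ^ d.
  apply: (@sum_reindex_le M E (fun j => j <= i) (fun j => E - (i - j + (j - i))) (expn K)).
    by move=> *; apply: leq_subr.
  move=> a b aM bM /= ai bi; lia.
have p2 : \sum_(j < M | ~~ (j <= i)) K ^ (E - (i - j + (j - i))) <= \sum_(d < E.+1) K ^ d.
  apply: (@sum_reindex_le M E (fun j => ~~ (j <= i)) (fun j => E - (i - j + (j - i))) (expn K)).
    by move=> *; apply: leq_subr.
  move=> a b aM bM /= ai bi; lia.
apply: (leq_trans (leq_add p1 p2)); lia.
Qed.


Lemma block (A : finType) (a0 : A) (u : seq A) :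
  1 < #|A| -> 0 < size u ->
  5 * #|[set x : (2 * #|A| ^ size u).-tuple A | ~~ infix u x]|
   <= 4 * #|A| ^ (2 * #|A| ^ size u).
Proof.
move=> K1 m0.
set m := size u; set K := #|A|; set M := K ^ m; set B := 2 * M.
have mM : m < M by apply: ltn_expl.
have KB : 0 < K ^ B by rewrite expn_gt0; lia.
pose Z (x : B.-tuple A) := \sum_(i < M) (take m (drop i x) == u : nat).
have eKB1 : M * K ^ (B - m) = K ^ B by rewrite /M -expnD; congr (_ ^ _); lia.
have eKB2 : M * (M * K ^ (B - 2 * m)) = K ^ B.
  by rewrite /M -!expnD; congr (_ ^ _); lia.
have h1 : K ^ B <= \sum_x Z x.
  rewrite /Z exchange_big /=.
  under eq_bigr do rewrite sum_card.
  rewrite -eKB1 -[M in M * _]card_ord -sum_nat_const.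
  apply: leq_sum => i _; apply: (@occ_lb A a0); move: (ltn_ord i); rewrite /B -/m; lia.
have h2 : \sum_x Z x ^ 2 <= 5 * K ^ B.
  have -> : \sum_x Z x ^ 2 = \sum_(i < M) \sum_(j < M)
      #|[set x : B.-tuple A | (take m (drop i x) == u) && (take m (drop j x) == u)]|.
    rewrite /Z; under eq_bigr do rewrite -mulnn big_distrlr /=.
    rewrite exchange_big /=; apply: eq_bigr => i _.
    rewrite exchange_big /=; apply: eq_bigr => j _.
    by rewrite -sum_card; apply: eq_bigr => x _; rewrite mulnb.
  apply: (@leq_trans (\sum_(i < M) (M * K ^ (B - 2 * m) + 4 * K ^ (B - m)))).
    apply: leq_sum => i _; apply: (@sumj A a0); move: (ltn_ord i) mM K1; rewrite /B -/m -/K; lia.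
  rewrite sum_nat_const card_ord mulnDr eKB2 mulnCA eKB1; lia.
have h3 := @CS _ Z.
set NA := [set x | 0 < Z x] in h3.
have h4 : K ^ B <= 5 * #|NA|.
  have : K ^ B * K ^ B <= 5 * #|NA| * K ^ B.
    apply: (leq_trans _ (leq_trans h3 _)).
      by rewrite mulnn leq_exp2r.
    by rewrite -mulnA mulnCA leq_mul2l h2 orbT.
  by rewrite leq_pmul2r.
have h5 : #|NA| <= #|[set x : B.-tuple A | infix u x]|.
  apply: subset_leq_card; apply/subsetP => x; rewrite !inE.
  apply: contraLR => ninf; rewrite -leqNgt leqn0 /Z; apply/eqP/big1 => i _.
  by case: eqP => // e; move: ninf; rewrite (@occ_infix _ u x i) // e eqxx.
have h6 : #|[set x : B.-tuple A | infix u x]| + #|[set x : B.-tuple A | ~~ infix u x]| = K ^ B.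
  rewrite -card_tuple -(cardsC [set x : B.-tuple A | infix u x]); congr (_ + _).
  by apply: eq_card => x; rewrite !inE.
lia.
Qed.


Lemma av_split (A : finType) (a0 : A) (u : seq A) L1 L2 :
  #|[set v : (L1 + L2).-tuple A | ~~ infix u v]| <=
  #|[set v : L1.-tuple A | ~~ infix u v]| * #|[set v : L2.-tuple A | ~~ infix u v]|.
Proof.
set S1 := [set v : L1.-tuple A | _]; set S2 := [set v : L2.-tuple A | _].
pose f (v : (L1 + L2).-tuple A) := (fit a0 L1 (take L1 v), fit a0 L2 (drop L1 v)).
have s1 (v : (L1 + L2).-tuple A) : size (take L1 v) = L1 by rewrite size_take_min size_tuple; lia.
have s2 (v : (L1 + L2).-tuple A) : size (drop L1 v) = L2 by rewrite size_drop size_tuple; lia.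
rewrite -cardsX -(@card_in_imset _ _ f); last first.
  move=> v w _ _ [] /(congr1 val) e1 /(congr1 val) e2; apply: val_inj.
  rewrite /= !val_fit // in e1 e2.
  change (tval v = tval w).
  by rewrite -(cat_take_drop L1 v) -(cat_take_drop L1 w) e1 e2.
apply: subset_leq_card; apply/subsetP => p /imsetP [v]; rewrite inE => ninf ->.
rewrite !inE /= !val_fit //; apply/andP; split.
  by apply: contra ninf => h; apply: (infix_trans h); apply: infix_take.
by apply: contra ninf => h; apply: (infix_trans h); apply: infix_drop.
Qed.

Lemma av_blocks (A : finType) (a0 : A) (u : seq A) q r :
  1 < #|A| -> 0 < size u ->
  5 ^ q * #|[set v : (q * (2 * #|A| ^ size u) + r).-tuple A | ~~ infix u v]|
   <= 4 ^ q * #|A| ^ (q * (2 * #|A| ^ size u) + r).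
Proof.
move=> K1 m0; set B := 2 * #|A| ^ size u.
elim: q => [|q IH].
  rewrite !expn0 !mul1n -card_tuple; apply: subset_leq_card; apply/subsetP => x _.
  by [].
have e : q.+1 * B + r = B + (q * B + r) by rewrite mulSn addnA.
rewrite e.
apply: (@leq_trans (5 ^ q.+1 * (#|[set v : B.-tuple A | ~~ infix u v]| *
    #|[set v : (q * B + r).-tuple A | ~~ infix u v]|))).
  by apply: leq_mul => //; apply: av_split.
have hb := @block A a0 u K1 m0.
rewrite -/B in hb.
rewrite expnS [4 ^ q.+1]expnS expnD.
have := leq_mul hb IH; rewrite -!mulnA.
set X := #|[set v : B.-tuple A | _]|; set Y := #|[set v : (q * B + r).-tuple A | _]|.
by rewrite [X * _]mulnCA [#|A| ^ B * _]mulnCA.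
Qed.


Definition Sm (A : finType) n m :=
  [set w : n.-tuple A | border (take m w) w && (occ (take m w) w == 2)].

Lemma border_info (A : eqType) (w : seq A) m :
  border (take m w) w -> 0 < m < size w /\ drop (size w - m) w = take m w.
Proof.
rewrite /border size_take_min => /and4P[h1 h2 _]; rewrite suffixE size_take_min => /eqP.
have -> : minn m (size w) = m by lia.
move=> e; split => //; lia.
Qed.

Lemma Sm_triv (A : finType) (a0 : A) n m : #|Sm A n m| <= #|A| ^ (n - m).
Proof.
have -> : n - m = size (iota 0 (n - m)) by rewrite size_iota.
apply: (@det_free A a0) => x y; rewrite !inE => /andP[/border_info [hm ex] _] /andP[/border_info [_ ey] _].
rewrite !size_tuple in hm ex ey.
move=> j jn; rewrite mem_iota => jF IH.
have j1 : n - m <= j by lia.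
have -> : j = (n - m) + (j - (n - m)) by lia.
rewrite -!nth_drop ex ey !nth_take; try lia.
apply: IH; lia.
Qed.

Lemma closed_cover (A : finType) n : 1 < n ->
  #|[set w : n.-tuple A | closed_word w]| <= \sum_(m < n) #|Sm A n m|.
Proof.
move=> n1; apply: card_cover => w; rewrite inE /closed_word size_tuple leqNgt n1 /=.
move=> /hasP [m]; rewrite mem_iota => /andP[_ mn] h.
by exists m => //; rewrite inE.
Qed.


Lemma Sm_mid (A : finType) (a0 : A) n m (w : n.-tuple A) : 2 * m <= n ->
  w \in Sm A n m -> ~~ infix (take m w) (drop m (take (n - m) w)).
Proof.
move=> h2; rewrite inE => /andP[/border_info [hm ex]]; rewrite size_tuple in hm ex.
apply: contraL => /infixP [s [s' e]].
set z := size s.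
have szt : size (take m w) = m by rewrite size_take_min size_tuple -/z; lia.
have szmid : size (drop m (take (n - m) w)) = n - 2 * m.
  by rewrite size_drop size_take_min size_tuple -/z; lia.
have hs : z + m <= n - 2 * m.
  move: szmid; rewrite e !size_cat size_take_min size_tuple -/z; lia.
rewrite /occ szt size_tuple (_ : (m <= n) = true); last by apply/idP; lia.
apply/negP => /eqP hc.
have : 3 <= count (fun i => take m (drop i w) == take m w) (iota 0 (n - m).+1).
  apply: (@count3 _ _ 0 (m + z) (n - m)); try lia.
  - by rewrite drop0.
  - apply/(@occPm _ a0 _ _ _ m szt); first by rewrite size_tuple; lia.
    move=> t tm.
    rewrite nth_take //.
    have := congr1 (fun y => nth a0 y (z + t)) e.
    rewrite /= nth_drop nth_take; last by rewrite -/z; lia.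
    rewrite nth_cat -/z ltnNge leq_addr /= addKn nth_cat szt tm nth_take // => h.
    by rewrite -addnA h.
  - by rewrite ex take_takel.
by rewrite hc.
Qed.

Lemma Sm_bound (A : finType) (a0 : A) n m q : 2 * m <= n ->
  (forall u : m.-tuple A,
     5 ^ q * #|[set v : (n - 2 * m).-tuple A | ~~ infix (val u) v]|
       <= 4 ^ q * #|A| ^ (n - 2 * m)) ->
  5 ^ q * #|Sm A n m| <= 4 ^ q * (#|A| ^ m * #|A| ^ (n - 2 * m)).
Proof.
move=> h2 Hu.
set L := n - 2 * m.
pose P := [set p : m.-tuple A * L.-tuple A | ~~ infix (val p.1) (val p.2)].
pose f (w : n.-tuple A) := (fit a0 m (take m w), fit a0 L (drop m (take (n - m) w))).
have s1 (w : n.-tuple A) : size (take m w) = m by rewrite size_take_min size_tuple; lia.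
have s2 (w : n.-tuple A) : size (drop m (take (n - m) w)) = L.
  by rewrite size_drop size_take_min size_tuple /L; lia.
have dec (w : n.-tuple A) : w \in Sm A n m ->
    val w = take m w ++ drop m (take (n - m) w) ++ take m w.
  rewrite inE => /andP[/border_info [_ ex] _]; rewrite size_tuple in ex.
  rewrite -{2}ex catA -{1}(take_takel w (_ : m <= n - m)); last by lia.
  by rewrite !cat_take_drop.
have hS : #|Sm A n m| <= #|P|.
  rewrite -(@card_in_imset _ _ f); last first.
    move=> v w vS wS [] /(congr1 val) e1 /(congr1 val) e2; apply: val_inj.
    rewrite /= !val_fit // in e1 e2.
    change (tval v = tval w); by rewrite (dec v vS) (dec w wS) e1 e2.
  apply: subset_leq_card; apply/subsetP => p /imsetP [w wS ->].
  by rewrite inE /= !val_fit //; apply: (@Sm_mid A a0).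
have hP : #|P| = \sum_(u : m.-tuple A) #|[set v : L.-tuple A | ~~ infix (val u) v]|.
  rewrite -sum_card; under [RHS]eq_bigr do rewrite -sum_card.
  by rewrite pair_big /=.
apply: (leq_trans (leq_mul (leqnn _) hS)); rewrite hP big_distrr /=.
apply: (@leq_trans (\sum_(u : m.-tuple A) 4 ^ q * #|A| ^ L)).
  by apply: leq_sum => u _; apply: Hu.
by rewrite sum_nat_const card_tuple mulnCA.
Qed.


Definition Bi (A : finType) n m i :=
  [set x : n.-tuple A | [&& 0 < i, i < n - m, take m x == drop (n - m) x &
                           take m (drop i x) == take m x]].

Lemma Bi_bound (A : finType) (a0 : A) n m i : 0 < m -> 3 * m <= n ->
  #|Bi A n m i| <= #|A| ^ (n - 2 * m).
Proof.
move=> m0 h3.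
case: (boolP ((0 < i) && (i < n - m))) => hi; last first.
  rewrite (_ : Bi A n m i = set0) ?cards0 //; apply/setP => x; rewrite !inE.
  by move: hi; case: (0 < i) => //=; case: (i < n - m).
move/andP: hi => [i0 inm].
have facts (z : n.-tuple A) : z \in Bi A n m i ->
    (forall t, t < m -> nth a0 z (n - m + t) = nth a0 z t) /\
    (forall t, t < m -> nth a0 z (i + t) = nth a0 z t).
  rewrite inE => /and4P[_ _ /eqP bz oz]; split.
    by move=> t tm; rewrite -nth_drop -bz !nth_take.
  have sz : size (take m z) = m by rewrite size_take_min size_tuple; lia.
  have hz : i + m <= size z by rewrite size_tuple; lia.
  move/(@occPm _ a0 _ _ _ m sz hz): oz => H.
  by move=> t tm; rewrite H // nth_take.
pose g j := if n - m <= j then j - (n - m) else if i <= j then j - i else j + i - (n - m).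
have core : forall F, (forall j, j < n -> j \notin F ->
      (j < i -> n - m - i <= j < m) /\ (i <= j < n - m -> j < i + m)) ->
    #|Bi A n m i| <= #|A| ^ size F.
  move=> F HF; apply: (@det_free A a0) => x y xB yB j jn jF IH.
  have [c1 c2] := HF j jn jF.
  have rule (z : n.-tuple A) : z \in Bi A n m i -> g j < j /\ nth a0 z j = nth a0 z (g j).
    move=> zB; have [bz oz] := facts z zB; rewrite /g.
    case: (leqP (n - m) j) => h1.
      split; first lia.
      have {1}-> : j = n - m + (j - (n - m)) by lia.
      by rewrite bz //; lia.
    case: (leqP i j) => h2.
      split; first lia.
      have {1}-> : j = i + (j - i) by lia.
      by rewrite oz //; lia.
    have /andP[h4 h5] := c1 h2.
    split; first lia.
    rewrite -oz // (_ : i + j = n - m + (j + i - (n - m))); last by lia.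
    by rewrite bz //; lia.
  have [lt ex] := rule x xB; have [_ ey] := rule y yB.
  by rewrite ex ey IH.
case: (leqP i (n - 2 * m)) => h.
  have := core (iota 0 i ++ iota (i + m) (n - 2 * m - i)).
  rewrite size_cat !size_iota (_ : i + (n - 2 * m - i) = n - 2 * m); last by lia.
  apply => j jn; rewrite mem_cat !mem_iota /= => hj; split; lia.
have := core (iota 0 (n - m - i) ++ iota m (i - m)).
rewrite size_cat !size_iota (_ : n - m - i + (i - m) = n - 2 * m); last by lia.
apply => j jn; rewrite mem_cat !mem_iota /= => hj; split; lia.
Qed.

Lemma lower (A : finType) (a0 : A) n m : 0 < m -> 3 * m <= n ->
  #|A| ^ (n - m) <= #|[set w : n.-tuple A | closed_word w]| + n * #|A| ^ (n - 2 * m).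
Proof.
move=> m0 h3.
set G := [set x : n.-tuple A | take m x == drop (n - m) x].
set Bad := [set x : n.-tuple A | (take m x == drop (n - m) x) &&
              has (fun i => take m (drop i x) == take m x) (iota 1 (n - m).-1)].
set Cl := [set w : n.-tuple A | closed_word w].
have hG : #|A| ^ (n - m) <= #|G|.
  pose f (y : (n - m).-tuple A) : n.-tuple A := fit a0 n (y ++ take m y).
  have sz (y : (n - m).-tuple A) : size (y ++ take m y) = n.
    by rewrite size_cat size_take_min size_tuple; lia.
  rewrite -card_tuple -cardsT -(@card_in_imset _ _ f); last first.
    move=> y z _ _ /(congr1 val); rewrite /f !val_fit // => e.
    apply: val_inj; have := congr1 (take (n - m)) e.
    by rewrite !take_size_cat ?size_tuple.
  apply: subset_leq_card; apply/subsetP => x /imsetP [y _ ->].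
  rewrite inE /f val_fit // takel_cat ?size_tuple; last by lia.
  by rewrite drop_size_cat ?size_tuple // take_takel.
have hsub : G \subset Cl :|: Bad.
  apply/subsetP => x; rewrite !inE => bx.
  rewrite bx /=; case: (boolP (has _ _)) => hb; first by rewrite orbT.
  rewrite orbF /closed_word size_tuple leqNgt (_ : 1 < n); last by lia.
  apply/hasP; exists m; first by rewrite mem_iota; lia.
  have sz : size (take m x) = m by rewrite size_take_min size_tuple; lia.
  move/eqP: bx => bx.
  rewrite /border /occ sz size_tuple prefix_take suffixE sz size_tuple -bx eqxx /=.
  rewrite (_ : (m <= n) = true); last by apply/idP; lia.
  apply/andP; split; first by apply/and3P; split => //; lia.
  apply/eqP; apply: count2; first by lia.
  - by rewrite drop0.
  - by rewrite -bx take_takel.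
  move=> i hi; apply: contra hb => h; apply/hasP; exists i => //.
  rewrite mem_iota; lia.
have hBad : #|Bad| <= \sum_(i < n) #|Bi A n m i|.
  apply: card_cover => x; rewrite inE => /andP[bx /hasP [i]].
  rewrite mem_iota => hi oi; exists i; first by lia.
  rewrite inE bx oi andbT; apply/andP; split; lia.
have hBi : \sum_(i < n) #|Bi A n m i| <= n * #|A| ^ (n - 2 * m).
  apply: (@leq_trans (\sum_(i < n) #|A| ^ (n - 2 * m))).
    by apply: leq_sum => i _; apply: (@Bi_bound A a0).
  by rewrite sum_nat_const card_ord.
have [h _] := leq_card_setU Cl Bad.
have := subset_leq_card hsub; lia.
Qed.


Lemma Sm0 (A : finType) n : #|Sm A n 0| = 0.
Proof.
apply/eqP; rewrite cards_eq0; apply/eqP/setP => w; rewrite !inE.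
by rewrite /border take0.
Qed.

Lemma per_m_small (A : finType) (a0 : A) n m : 1 < #|A| ->
  0 < (n - 2 * m) %/ (2 * #|A| ^ m) ->
  5 ^ ((n - 2 * m) %/ (2 * #|A| ^ m)) * (n * #|Sm A n m|) <=
  2 * ((n - 2 * m) %/ (2 * #|A| ^ m) + 2) * 4 ^ ((n - 2 * m) %/ (2 * #|A| ^ m)) * #|A| ^ n.
Proof.
move=> K1; set K := #|A|; set B := 2 * K ^ m; set q := (n - 2 * m) %/ B => q0.
case: (posnP m) => [->|m0]; first by rewrite Sm0 !muln0.
have B0 : 0 < B by rewrite /B muln_gt0 expn_gt0; lia.
have mK : m < K ^ m by apply: ltn_expl.
have hL : n - 2 * m < (q + 1) * B by rewrite addn1; apply: ltn_ceil.
have h2m : 2 * m <= n.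
  have : q * B <= n - 2 * m by rewrite leq_trunc_div.
  have : 0 < q * B by rewrite muln_gt0 q0.
  lia.
have hn : n <= 2 * (q + 2) * K ^ m.
  move: hL; rewrite /B; lia.
have Hu : forall u : m.-tuple A,
    5 ^ q * #|[set v : (n - 2 * m).-tuple A | ~~ infix (val u) v]|
      <= 4 ^ q * #|A| ^ (n - 2 * m).
  move=> u.
  have := @av_blocks A a0 (val u) q ((n - 2 * m) %% B) K1.
  rewrite size_tuple -/K -/B /q -divn_eq; apply; lia.
have hS := @Sm_bound A a0 n m q h2m Hu.
have eK : K ^ m * (K ^ m * K ^ (n - 2 * m)) = K ^ n.
  by rewrite -!expnD; congr (_ ^ _); lia.
rewrite mulnCA.
apply: (leq_trans (leq_mul hn hS)).
rewrite -/K; rewrite (_ : 2 * (q + 2) * K ^ m * (4 ^ q * (K ^ m * K ^ (n - 2 * m)))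
   = 2 * (q + 2) * 4 ^ q * (K ^ m * (K ^ m * K ^ (n - 2 * m)))); last by ring.
by rewrite eK.
Qed.


Lemma bucket1 (A : finType) n : 1 < #|A| -> 0 < n ->
  \sum_(m < n | (n - 2 * m) %/ (2 * #|A| ^ m) == 0) n * #|A| ^ (n - m)
    <= 2 * #|A| ^ (n + 2).
Proof.
move=> K1 n0; set K := #|A|; set t := trunc_log K n.
have Kt : K ^ t <= n by apply: trunc_logP.
have Kt1 : n < K ^ t.+1 by apply: trunc_log_ltn.
have hm : forall m, (n - 2 * m) %/ (2 * K ^ m) == 0 -> t <= m + 1.
  move=> m; rewrite -leqn0 leqNgt divn_gt0 ?muln_gt0 ?expn_gt0; last by lia.
  rewrite -ltnNge => h.
  have mK : m < K ^ m by apply: ltn_expl.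
  have : K ^ t < K ^ (m + 2).
    rewrite expnD; have : 4 <= K ^ 2 by rewrite -mulnn; nia.
    nia.
  rewrite ltn_exp2l //; lia.
rewrite -big_distrr /=.
have hs : \sum_(m < n | (n - 2 * m) %/ (2 * K ^ m) == 0) K ^ (n - m)
    <= \sum_(d < (n - t.-1).+1) K ^ d.
  apply: (@sum_reindex_le n (n - t.-1) (fun m => (n - 2 * m) %/ (2 * K ^ m) == 0) (fun m => n - m) (expn K)).
    move=> i iN /hm; lia.
  move=> i j iN jN _ _; lia.
have := geo2 K (n - t.-1) K1 => g.
apply: (@leq_trans (n * (2 * K ^ (n - t.-1)))).
  by rewrite leq_mul2l (leq_trans hs (ltnW g)) orbT.
rewrite mulnCA leq_mul2l; apply/orP; right.
apply: (@leq_trans (K ^ t.+1 * K ^ (n - t.-1))).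
  by rewrite leq_mul2r (ltnW Kt1) orbT.
rewrite -expnD; apply: leq_pexp2l; first by lia.
have := ltn_expl t K1; rewrite -/K; lia.
Qed.

Lemma q_dec (A : finType) n m1 m2 : 1 < #|A| -> m1 < m2 ->
  0 < (n - 2 * m1) %/ (2 * #|A| ^ m1) ->
  (n - 2 * m2) %/ (2 * #|A| ^ m2) < (n - 2 * m1) %/ (2 * #|A| ^ m1).
Proof.
move=> K1 lt q0; set K := #|A|.
apply: (@leq_ltn_trans ((n - 2 * m1) %/ (2 * K ^ m1 * 2))).
  apply: (@leq_trans ((n - 2 * m1) %/ (2 * K ^ m2))).
    by apply: leq_div2r; lia.
  apply: leq_div2l; first by rewrite !muln_gt0 expn_gt0; lia.
  rewrite -mulnA leq_mul2l /=; apply: (@leq_trans (K ^ m1 * K)).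
    by rewrite leq_mul2l K1 orbT.
  by rewrite -expnSr leq_pexp2l //; lia.
by rewrite divnMA; apply: ltn_Pdiv.
Qed.


Lemma pow6 t : 6 <= t -> 6 * t + 6 <= 2 ^ t.
Proof.
elim: t => // t IH; rewrite leq_eqVlt => /orP[/eqP <-|] //.
rewrite ltnS => /IH h; rewrite expnS; lia.
Qed.

Lemma lower_final (A : finType) (a0 : A) n : 1 < #|A| -> 17 < n ->
  #|A| ^ n <= 4 * #|A| * n * #|[set w : n.-tuple A | closed_word w]|.
Proof.
move=> K1 n17; set K := #|A|; set C := #|[set w : n.-tuple A | closed_word w]|.
set m := (trunc_log K (2 * n)).+1.
have h1 : K ^ m.-1 <= 2 * n by apply: trunc_logP => //; lia.
have h2 : 2 * n < K ^ m by apply: trunc_log_ltn.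
have h3 : 3 * m <= n.
  rewrite leqNgt; apply/negP => hlt.
  have : 2 ^ m.-1 <= K ^ m.-1 by rewrite leq_exp2r //; lia.
  have := pow6 m.-1; lia.
have hl := @lower A a0 n m (ltn0Sn _) h3; rewrite -/K -/C in hl.
have e1 : K ^ m * K ^ (n - 2 * m) = K ^ (n - m) by rewrite -expnD; congr (_ ^ _); lia.
have h4 : 2 * n * K ^ (n - 2 * m) <= K ^ (n - m).
  by rewrite -e1 leq_mul2r (ltnW h2) orbT.
have h5 : K ^ (n - m) <= 2 * C by lia.
have e2 : K ^ n = K ^ m.-1 * K * K ^ (n - m).
  by rewrite -expnSr prednK // -expnD; congr (_ ^ _); lia.
rewrite e2; apply: (@leq_trans (2 * n * K * (2 * C))).
  by apply: leq_mul => //; rewrite leq_mul2r h1 orbT.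
rewrite (_ : 2 * n * K * (2 * C) = 4 * K * n * C) //; ring.
Qed.



Local Open Scope ring_scope.

Lemma geoq N : \sum_(d < N) (d%:R + 2) * (4 / 5 : rat) ^+ d
   = 30 - (5 * N%:R + 30) * (4 / 5) ^+ N.
Proof.
elim: N => [|N IH]; first by rewrite big_ord0 expr0; lra.
rewrite big_ord_recr /= IH exprS -addn1 natrD.
set X := (4 / 5 : rat) ^+ N. by field.
Qed.

Lemma geoq_le N : \sum_(d < N) (d%:R + 2) * (4 / 5 : rat) ^+ d <= 30.
Proof.
rewrite geoq lerBlDr lerDl.
by apply: mulr_ge0; [apply: addr_ge0 => //; apply: mulr_ge0 | apply: exprn_ge0].
Qed.

Lemma sum_reindex_leR N M (P : pred nat) (h : nat -> nat) (f : nat -> rat) :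
  (forall d, 0 <= f d) ->
  (forall i, (i < N)%N -> P i -> (h i <= M)%N) ->
  (forall i j, (i < N)%N -> (j < N)%N -> P i -> P j -> h i = h j -> i = j) ->
  \sum_(i < N | P i) f (h i) <= \sum_(d < M.+1) f d.
Proof.
move=> f0 hM hinj.
pose g (i : 'I_N) : 'I_M.+1 := inord (h i).
have -> : \sum_(i < N | P i) f (h i) = \sum_(i in [pred i : 'I_N | P i]) f (g i).
  by apply: eq_bigr => i Pi; rewrite /g inordK // ltnS hM.
rewrite -(big_imset (fun d : 'I_M.+1 => f d)) /=; last first.
  move=> i j; rewrite !inE => Pi Pj /(congr1 val) /=.
  rewrite /g !inordK ?ltnS ?hM // => e.
  apply: val_inj; exact: (hinj _ _ (ltn_ord i) (ltn_ord j)).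
rewrite [X in _ <= X](bigID (mem (g @: [pred i : 'I_N | P i]))) /= lerDl.
by apply: sumr_ge0 => i _.
Qed.

Lemma per_m_rat (A : finType) (a0 : A) n m : (1 < #|A|)%N ->
  (0 < (n - 2 * m) %/ (2 * #|A| ^ m))%N ->
  ((n * #|Sm A n m|)%N%:R : rat) <=
  2 * (#|A| ^ n)%:R * (((n - 2 * m) %/ (2 * #|A| ^ m))%:R + 2) *
      (4 / 5) ^+ ((n - 2 * m) %/ (2 * #|A| ^ m)).
Proof.
move=> K1 q0; have := @per_m_small A a0 n m K1 q0.
set q := (_ %/ _)%N; set X := (n * _)%N => h.
have h' : (5 ^+ q * X%:R : rat) <= 2 * (q%:R + 2) * 4 ^+ q * (#|A| ^ n)%:R.
  have := h; rewrite -(ler_nat rat) !natrM !natrX natrD => h2.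
  by rewrite (le_trans h2).
have p5 : (0 : rat) < 5 ^+ q by apply: exprn_gt0.
rewrite -(ler_pM2l p5) (le_trans h') //.
have e : (5 : rat) ^+ q * (4 / 5) ^+ q = 4 ^+ q.
  by rewrite -exprMn [5 * _]mulrC divfK.
rewrite (_ : 5 ^+ q * (2 * (#|A| ^ n)%:R * (q%:R + 2) * (4 / 5) ^+ q) =
   2 * (q%:R + 2) * (5 ^+ q * (4 / 5) ^+ q) * (#|A| ^ n)%:R); last by ring.
by rewrite e.
Qed.

Lemma upper_bnd (A : finType) (a0 : A) n : (1 < #|A|)%N -> (1 < n)%N ->
  (n%:R * #|[set w : n.-tuple A | closed_word w]|%:R : rat)
    <= (2 * #|A| ^ (n + 2))%N%:R + 60 * (#|A| ^ n)%:R.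
Proof.
move=> K1 n1; set K := #|A|.
set q := fun m => ((n - 2 * m) %/ (2 * K ^ m))%N.
have hC : (n * #|[set w : n.-tuple A | closed_word w]| <= \sum_(m < n) n * #|Sm A n m|)%N.
  by rewrite -big_distrr leq_mul2l closed_cover // orbT.
have hC' : (n%:R * #|[set w : n.-tuple A | closed_word w]|%:R : rat)
    <= (\sum_(m < n) n * #|Sm A n m|)%N%:R by rewrite -natrM ler_nat.
apply: (le_trans hC').
rewrite (bigID (fun m : 'I_n => q m == 0%N)) natrD; apply: lerD.
  rewrite ler_nat; apply: (leq_trans _ (@bucket1 A n K1 (ltnW n1))).
  by apply: leq_sum => m _; rewrite leq_mul2l (@Sm_triv A a0) orbT.
rewrite natr_sum.
apply: (le_trans (y := \sum_(m < n | q m != 0%N)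
    2 * (K ^ n)%:R * ((q m)%:R + 2) * (4 / 5) ^+ (q m))).
  apply: ler_sum => m hm; apply: (@per_m_rat A a0); first by [].
  by rewrite lt0n.
have hs : \sum_(m < n | q m != 0%N) ((q m)%:R + 2) * (4 / 5 : rat) ^+ (q m) <= 30.
  apply: (le_trans _ (geoq_le n.+1)).
  apply: (@sum_reindex_leR n n (fun m => q m != 0%N) q (fun d => (d%:R + 2) * (4 / 5) ^+ d)).
  - by move=> d; apply: mulr_ge0; [apply: addr_ge0 | apply: exprn_ge0].
  - by move=> i _ _; rewrite /q; apply: (leq_trans (leq_div _ _)); apply: leq_subr.
  move=> i j iN jN qi qj e; rewrite -lt0n in qi; rewrite -lt0n in qj.
  case: (ltngtP i j) => // h.
    by have := @q_dec A n i j K1 h qi; rewrite -/K -/(q i) -/(q j) e ltnn.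
  by have := @q_dec A n j i K1 h qj; rewrite -/K -/(q i) -/(q j) e ltnn.
under eq_bigr do rewrite -mulrA.
rewrite -mulr_sumr.
have KP : (0 : rat) <= 2 * (K ^ n)%:R by apply: mulr_ge0.
apply: (le_trans (ler_wpM2l KP hs)).
by rewrite le_eqVlt; apply/orP; left; apply/eqP; ring.
Qed.

Theorem theorem1 (k : nat) (hk : (2 <= k)%N) :
  (exists (N : nat) (c : rat), (0 < N)%N /\ 0 < c /\
     forall n : nat, (N < n)%N -> c * ((k ^ n)%:R / n%:R) <= (C k n)%:R)
  /\
  (exists (N' : nat) (c' : rat), (0 < N')%N /\ 0 < c' /\
     forall n : nat, (N' < n)%N -> (C k n)%:R <= c' * ((k ^ n)%:R / n%:R)).
Proof.
have k0 : (0 < k)%N by lia.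
have a0 : 'I_k := Ordinal k0.
have Kk : #|'I_k| = k by rewrite card_ord.
have K1 : (1 < #|'I_k|)%N by rewrite Kk.
split.
  exists 17%N, ((4 * k%:R)^-1 : rat); split; first by []. split.
    by rewrite invr_gt0 mulr_gt0 // ltr0n.
  move=> n n17; have := @lower_final _ a0 n K1 n17; rewrite Kk => h.
  have n0 : (0 : rat) < n%:R by rewrite ltr0n; lia.
  rewrite /C mulrA ler_pdivrMr // ler_pdivrMl ?mulr_gt0 ?ltr0n //.
  move: h; rewrite -(ler_nat rat) !natrM => h'; apply: (le_trans h').
  by rewrite le_eqVlt; apply/orP; left; apply/eqP; ring.
exists 1%N, ((2 * k%:R ^+ 2 + 60) : rat); split; first by []. split.
  by apply: addr_gt0 => //; rewrite mulr_gt0 // exprn_gt0 // ltr0n.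
move=> n n1; have := @upper_bnd _ a0 n K1 n1; rewrite Kk => h.
have n0 : (0 : rat) < n%:R by rewrite ltr0n; lia.
rewrite /C mulrA ler_pdivlMr // mulrC (le_trans h) //.
rewrite natrM !natrX exprD le_eqVlt; apply/orP; left; apply/eqP; ring.
Qed.
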